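(* Let $F$ be a semi-flow on a connected metrizable space $X$. Then $\mathcal{NW}_F$ is forward-invariant under the induced action $F^t(x,y)=(F^t(x),F^t(y))$ on $X\times X$. Moreover, for every $x\in X$: (1) $\mathrm{Down}_{\mathcal{NW}_F}(x)$ is forward-invariant under $F$; (2) $\mathrm{Down}_{\mathcal{NW}_F}(x)\supset\mathcal{O}_F(x)\cup\Omega_F(x)$; (3) if $\Omega_F(x)\neq\emptyset$, then $\mathcal{O}_F(x)\cup\mathrm{Down}_{\mathcal{NW}_F}(\Omega_F(x))\supset\mathrm{Down}_{\mathcal{NW}_F}(x)$; (4) $\mathcal{O}_F(x)\cup\mathrm{Down}_{\mathcal{NW}_F}(y)\supset\mathrm{Down}_{\mathcal{NW}_F}(x)$ for all $y\in\mathcal{O}_F(x)$; (5) if $F^t$ is an open map for every $t\ge0$, then $\mathrm{Down}_{\mathcal{NW}_F}(x)=\mathcal{O}_F(x)\cup\mathrm{Down}_{\mathcal{NW}_F}(y)$ for all $y\in\mathcal{O}_F(x)$.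
   Context: A semi-flow on $X$ is a continuous map $F:\mathbb{T}\times X\to X$, $(t,x)\mapsto F^t(x)$, where $\mathbb{T}=\{0,1,2,\dots\}$ or $[0,\infty)$, with $F^0=\mathrm{id}$ and $F^{t_1+t_2}=F^{t_2}\circ F^{t_1}$. Put $\mathcal{O}_F(x)=\{F^t(x):t\in\mathbb{T}\}$ and $\mathcal{O}_F=\{(x,y):y\in\mathcal{O}_F(x)\}$. $\Omega_F(x)$ is the set of $y$ with $F^{t_n}(x)\to y$ for some $t_n\to\infty$. The non-wandering relation $\mathcal{NW}_F$ is the closure of $\mathcal{O}_F$ in $X\times X$. For a relation $D$, $\mathrm{Down}_D(x)=\{y:(x,y)\in D\}$ and $\mathrm{Down}_D(M)=\bigcup_{x\in M}\mathrm{Down}_D(x)$. A set $A$ is forward-invariant under $F$ if $F^t(A)\subset A$ for all $t$. *)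

(* Defs.v *)
From HB Require Import structures.
From mathcomp Require Import all_boot all_order all_algebra.
From mathcomp Require Import all_classical all_reals all_analysis.
Set Implicit Arguments. Unset Strict Implicit. Unset Printing Implicit Defensive.
Import Order.TTheory GRing.Theory Num.Theory.
Import numFieldNormedType.Exports.
Local Open Scope classical_set_scope.
Local Open Scope ring_scope.

Section SemiFlow.
Variables (R : realType).

(* The time set: disc = true gives {0,1,2,...}, disc = false gives [0,oo),
   both viewed as subsets of R (with the subspace topology). *)
Definition Tset (disc : bool) : set R :=
  if disc then [set t | exists n : nat, t = n%:R] else [set t | 0 <= t].

Variable X : topologicalType.

(* F : T x X -> X is a semi-flow (F t is only meaningful for t in Tset) *)
Definition semiflow (disc : bool) (F : R -> X -> X) : Prop :=
  [/\ {within Tset disc `*` [set: X], continuous (fun p : R * X => F p.1 p.2)},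
      (forall x, F 0 x = x) &
      (forall t1 t2, Tset disc t1 -> Tset disc t2 ->
         forall x, F (t1 + t2) x = F t2 (F t1 x))].

Definition sf_orbit (disc : bool) (F : R -> X -> X) (x : X) : set X :=
  [set F t x | t in Tset disc].

Definition sf_orbit_rel (disc : bool) (F : R -> X -> X) : set (X * X) :=
  [set p | sf_orbit disc F p.1 p.2].

Definition sf_omega (disc : bool) (F : R -> X -> X) (x : X) : set X :=
  [set y | exists t : nat -> R,
     (forall n, Tset disc (t n)) /\ t @ \oo --> +oo /\
     (fun n => F (t n) x) @ \oo --> y].

Definition sf_NW (disc : bool) (F : R -> X -> X) : set (X * X) :=
  closure (sf_orbit_rel disc F).

Definition sf_Down (D : set (X * X)) (x : X) : set X := [set y | D (x, y)].

Definition sf_DownS (D : set (X * X)) (M : set X) : set X :=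
  \bigcup_(x in M) sf_Down D x.

Definition forward_invariant (disc : bool) (F : R -> X -> X) (A : set X) :=
  forall t, Tset disc t -> F t @` A `<=` A.

Definition forward_invariant2 (disc : bool) (F : R -> X -> X) (A : set (X * X)) :=
  forall t, Tset disc t -> (fun p : X * X => (F t p.1, F t p.2)) @` A `<=` A.

Definition open_map (f : X -> X) := forall U : set X, open U -> open (f @` U).

End SemiFlow.

(* Main.v *)
Require Import Defs.
From HB Require Import structures.
From mathcomp Require Import all_boot all_order all_algebra.
From mathcomp Require Import all_classical all_reals all_analysis.
Import Order.TTheory GRing.Theory Num.Theory.
Import numFieldNormedType.Exports.
Local Open Scope classical_set_scope.
Local Open Scope ring_scope.

Lemma nbhs_pairI {R : realType} {X : pseudoMetricType R} {a b : X} {P Q : set X} :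
  nbhs a P -> nbhs b Q -> nbhs (a, b) (P `*` Q).
Proof. by move=> nP nQ; exists (P, Q). Qed.

Lemma nbhs_pairE {R : realType} {X : pseudoMetricType R} (a b : X) W :
  nbhs (a, b) W -> exists P Q, [/\ nbhs a P, nbhs b Q & P `*` Q `<=` W].
Proof. by case=> [[P Q]] /= [nP nQ] sW; exists P, Q; split. Qed.

Lemma NW_intro {R : realType} {X : pseudoMetricType R} {disc} {F : R -> X -> X} {a b} :
  (forall P Q, nbhs a P -> nbhs b Q ->
     exists a' s, [/\ Tset disc s, P a' & Q (F s a')]) ->
  sf_NW disc F (a, b).
Proof.
move=> H W /nbhs_pairE [P [Q [nP nQ sW]]].
have [a' [s [Ts Pa Qb]]] := H P Q nP nQ.
exists (a', F s a'); split; first by exists s.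
by apply: sW; split.
Qed.

Lemma NW_elim {R : realType} {X : pseudoMetricType R} {disc} {F : R -> X -> X} {a b} {P Q} :
  sf_NW disc F (a, b) -> nbhs a P -> nbhs b Q ->
  exists a' s, [/\ Tset disc s, P a' & Q (F s a')].
Proof.
move=> H nP nQ; have [[a' b'] [[s Ts e] [/= Pa Qb]]] := H _ (nbhs_pairI nP nQ).
by exists a', s; split => //=; rewrite e.
Qed.

Lemma sf_cont {R : realType} {X : pseudoMetricType R} {disc} {F : R -> X -> X} :
  semiflow disc F -> forall t x, Tset disc t -> forall U, nbhs (F t x) U ->
  exists P Q, [/\ nbhs t P, nbhs x Q &
     forall s y, P s -> Tset disc s -> Q y -> U (F s y)].
Proof.
case=> c _ _ t x Tt U nU.
have := (subspace_continuousP _ _).1 c (t, x) (conj Tt I) _ nU.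
case=> [[P Q]] /= [nP nQ] sW; exists P, Q; split => // s y Ps Ts Qy.
exact: (sW (s, y)).
Qed.

Lemma sf_contx {R : realType} {X : pseudoMetricType R} {disc} {F : R -> X -> X} :
  semiflow disc F -> forall t, Tset disc t -> forall x U, nbhs (F t x) U ->
  nbhs x (F t @^-1` U).
Proof.
move=> sf t Tt x U nU; have [P [Q [nP nQ H]]] := sf_cont sf t x Tt U nU.
apply: filterS nQ => y Qy; apply: H => //; exact: nbhs_singleton.
Qed.

Lemma Tset0 {R : realType} disc : Tset disc (0 : R).
Proof. by case: disc => //=; exists 0%N. Qed.

Lemma TsetD {R : realType} disc (s t : R) : Tset disc s -> Tset disc t -> Tset disc (s + t).
Proof.
case: disc => /=; last by move=> ? ?; rewrite addr_ge0.
by move=> [m ->] [n ->]; exists (m + n)%N; rewrite natrD.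
Qed.

Lemma TsetB {R : realType} disc (s t : R) : Tset disc s -> Tset disc t -> t <= s -> Tset disc (s - t).
Proof.
case: disc => /=; last by move=> ? ? ?; rewrite subr_ge0.
move=> [m ->] [n ->]; rewrite ler_nat => nm; exists (m - n)%N; by rewrite natrB.
Qed.

Lemma Tset_ge0 {R : realType} disc (s : R) : Tset disc s -> 0 <= s.
Proof. by case: disc => //= -[m ->]. Qed.

Lemma flowE {R : realType} {X : pseudoMetricType R} {disc} {F : R -> X -> X} :
  semiflow disc F -> forall s t x, Tset disc s -> Tset disc t -> F (s + t) x = F t (F s x).
Proof. by case=> _ _ h s t x Ts Tt; rewrite h. Qed.


Definition Kset {R : realType} (disc : bool) (N : nat) : set R :=
  if disc then (fun n : nat => n%:R) @` `I_N else [set` `[0, N%:R]].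

Lemma Kset_compact {R : realType} disc N : compact (@Kset R disc N).
Proof.
rewrite /Kset; case: disc.
  exact/finite_compact/finite_image/finite_II.
exact: segment_compact.
Qed.

Lemma Kset_Tset {R : realType} {disc N} {s : R} : Kset disc N s -> Tset disc s.
Proof.
rewrite /Kset; case: disc => /=.
  by move=> [m _ <-]; exists m.
by rewrite in_itv /= => /andP[].
Qed.

Lemma Kset_in {R : realType} disc N (s : R) : Tset disc s -> s < N%:R -> Kset disc N s.
Proof.
rewrite /Kset; case: disc => /=.
  by move=> [m ->]; rewrite ltr_nat => mN; exists m.
by move=> s0 sN; rewrite in_itv /= s0 (ltW sN).
Qed.

Lemma lemA {R : realType} {X : pseudoMetricType R} {disc} {F : R -> X -> X} :
  semiflow disc F -> hausdorff_space X -> forall x y,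
  sf_NW disc F (x, y) -> ~ sf_orbit disc F x y -> forall (N : nat) P0 Q0,
  nbhs x P0 -> nbhs y Q0 ->
  exists x' s, [/\ Tset disc s, N%:R <= s, P0 x' & Q0 (F s x')].
Proof.
move=> sf hX x y NW nO N P0 Q0 nP0 nQ0.
case: (pselect (exists x' s, [/\ Tset disc s, N%:R <= s, P0 x' & Q0 (F s x')])) => // Hn.
have Hlt : forall x' s, Tset disc s -> P0 x' -> Q0 (F s x') -> s < N%:R.
  move=> x' s Ts Px Qx; rewrite ltNge; apply/negP => Ns; apply: Hn.
  by exists x', s; split.
pose D : set (set X * set X) := [set PQ | nbhs x PQ.1 /\ nbhs y PQ.2].
pose B (PQ : set X * set X) : set R := [set s | Tset disc s /\
   exists x', (PQ.1 `&` P0) x' /\ (PQ.2 `&` Q0) (F s x')].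
have FF : Filter (filter_from D B).
  apply: filter_from_filter; first by exists (setT, setT); split; exact: filterT.
  move=> i j [Di1 Di2] [Dj1 Dj2]; exists (i.1 `&` j.1, i.2 `&` j.2).
    by split; apply: filterI.
  move=> s [Ts [x' [[[I1 J1] P] [[I2 J2] Q]]]]; split.
    by split => //; exists x'.
  by split => //; exists x'.
have PF : ProperFilter (filter_from D B).
  apply: filter_from_proper => i [Di1 Di2].
  have [x' [s [Ts Px Qx]]] := NW_elim NW (filterI Di1 nP0) (filterI Di2 nQ0).
  by exists s; split => //; exists x'.
have BK : filter_from D B (Kset disc N).
  exists (setT, setT); first by split; exact: filterT.
  move=> s [Ts [x' [[_ Px] [_ Qx]]]]; exact: Kset_in (Hlt _ _ Ts Px Qx).
have [s [Ks cl]] := Kset_compact disc N _ PF BK.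
have Ts := Kset_Tset Ks.
apply: False_ind; apply: nO; exists s => //; apply: hX => A Bn nA nB.
have [P1 [Q1 [nP1 nQ1 H1]]] := sf_cont sf s x Ts A nA.
have [s' [[Ts' [x' [[Q1x _] [Bx _]]]] P1s']] := cl (B (Q1, Bn)) P1 (ex_intro2 _ _ (Q1, Bn) (conj nQ1 nB) (fun z h => h)) nP1.
by exists (F s' x'); split => //; exact: H1.
Qed.

Lemma lemB {R : realType} {X : pseudoMetricType R} {disc} {F : R -> X -> X} :
  semiflow disc F -> hausdorff_space X -> forall x y r,
  sf_NW disc F (x, y) -> ~ sf_orbit disc F x y -> Tset disc r ->
  sf_NW disc F (F r x, y).
Proof.
move=> sf hX x y r NW nO Tr; apply: NW_intro => P Q nP nQ.
have nP' := sf_contx sf r Tr x P nP.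
have [x' [s [Ts Ns Px Qx]]] := lemA sf hX x y NW nO (Num.Def.trunc r).+1 _ _ nP' nQ.
have rs : r <= s by apply: le_trans Ns; apply: ltW; exact: truncnS_gt.
exists (F r x'), (s - r); split => //; first exact: TsetB.
by rewrite -(flowE sf) //; [rewrite addrC subrK | exact: TsetB].
Qed.

Theorem proposition10 (R : realType) (X : pseudoMetricType R)
  (disc : bool) (F : R -> X -> X) :
  hausdorff_space X -> connected [set: X] -> semiflow disc F ->
  forward_invariant2 disc F (sf_NW disc F) /\
  (forall x : X,
    forward_invariant disc F (sf_Down (sf_NW disc F) x) /\
    sf_orbit disc F x `|` sf_omega disc F x `<=` sf_Down (sf_NW disc F) x /\
    (sf_omega disc F x !=set0 ->
       sf_Down (sf_NW disc F) x `<=` sf_orbit disc F x `|` sf_DownS (sf_NW disc F) (sf_omega disc F x)) /\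
    (forall y, sf_orbit disc F x y ->
       sf_Down (sf_NW disc F) x `<=` sf_orbit disc F x `|` sf_Down (sf_NW disc F) y) /\
    ((forall t, Tset disc t -> open_map (F t)) ->
       forall y, sf_orbit disc F x y ->
         sf_Down (sf_NW disc F) x = sf_orbit disc F x `|` sf_Down (sf_NW disc F) y)).
Proof.
move=> hX _ sf.
have part4 : forall x y, sf_orbit disc F x y ->
       sf_Down (sf_NW disc F) x `<=` sf_orbit disc F x `|` sf_Down (sf_NW disc F) y.
  move=> x _ [r Tr <-] z NW.
  case: (pselect (sf_orbit disc F x z)) => [Ho|nO]; first by left.
  by right; exact: lemB.
have part2 : forall x, sf_orbit disc F x `|` sf_omega disc F x `<=` sf_Down (sf_NW disc F) x.
  move=> x y [Ho|[t [Tt [_ cv]]]].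
    by apply: subset_closure.
  apply: NW_intro => P Q nP nQ.
  have [N _ HN] := cv Q nQ.
  idtac.
  exists x, (t N); split => //; first exact: nbhs_singleton.
  exact: (HN N (leqnn N)).
split.
  move=> t Tt _ [[a b] NW <-] /=; apply: NW_intro => P Q nP nQ.
  have [a' [s [Ts Pa Qb]]] := NW_elim NW (sf_contx sf t Tt a P nP) (sf_contx sf t Tt b Q nQ).
  exists (F t a'), s; split => //.
  by rewrite -(flowE sf) // addrC (flowE sf).
move=> x; split.
  move=> t Tt _ [y NW <-]; rewrite /sf_Down /=; apply: NW_intro => P Q nP nQ.
  have [a' [s [Ts Pa Qb]]] := NW_elim NW nP (sf_contx sf t Tt y Q nQ).
  exists a', (s + t); split => //; first exact: TsetD.
  by rewrite (flowE sf).
split; first exact: part2.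
split.
  move=> [z0 [t [Tt [tinf cv]]]] y NW.
  case: (pselect (sf_orbit disc F x y)) => [Ho|nO]; first by left.
  right; exists z0; first by exists t; split.
  rewrite /sf_Down /=; apply: NW_intro => P Q nP nQ.
  have [N _ HN] := cv _ (nbhs_interior nP).
  have NWN := lemB sf hX x y (t N) NW nO (Tt N).
  have nPN : nbhs (F (t N) x) P°.
    apply: open_nbhs_nbhs; split; first exact: open_interior.
    exact: (HN N (leqnn N)).
  have [a' [s [Ts Pa Qb]]] := NW_elim NWN nPN nQ.
  by exists a', s; split => //; apply: interior_subset.
split; first exact: part4.
move=> hO y oy; apply/seteqP; split; first exact: part4.
move=> z [oz|NW]; first by apply: part2; left.
case: oy NW => r Tr <- NW; rewrite /sf_Down /=; apply: NW_intro => P Q nP nQ.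
have nP' : nbhs (F r x) (F r @` P°).
  apply: open_nbhs_nbhs; split.
    by apply: hO => //; exact: open_interior.
  by exists x => //; exact: nbhs_singleton (nbhs_interior nP).
have [a' [s [Ts [x' Px' <-] Qb]]] := NW_elim NW nP' nQ.
exists x', (r + s); split => //; first exact: TsetD.
  exact: interior_subset.
by rewrite (flowE sf).
Qed.
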